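(* Let $A$ be a finite alphabet, $a\in A$, and let $M$ and $N$ be finite $\mathcal J$-trivial monoids with $|M|=m$ and $|N|=n$. Let $\rho$ be the number of elements in a longest strict $\leq_{\mathcal R}$-chain in $M$ and $\lambda$ the number of elements in a longest strict $\leq_{\mathcal L}$-chain in $N$. Let $\varphi:A^*\to M$ and $\psi:A^*\to N$ be homomorphisms, and let $\mu_a:A^*\to M\Diamond N$ be the associated homomorphism. Then for every $u\in A^*$ the set $(\mu_a(u))_{1,2}$ has at most $\rho+\lambda-1$ elements (and $\rho+\lambda-1\leq m+n-1$). In particular, $$|\mu_a(A^* )|\leq mn\left(\binom{mn}{0}+\binom{mn}{1}+\dots+\binom{mn}{\rho+\lambda-1}\right).$$
   Context: On a monoid $O$: $p\leq_{\mathcal R} q$ iff $p=qr$ for some $r\in O$; $p\leq_{\mathcal L} q$ iff $p=sq$ for some $s\in O$; $p\leq_{\mathcal J} q$ iff $p=sqr$ for some $r,s\in O$. $O$ is $\mathcal J$-trivial if $p\leq_{\mathcal J}q\leq_{\mathcal J}p$ implies $p=q$. For finite monoids $M,N$, the Schützenberger product $M\Diamond N$ is the set of $2\times2$ matrices $P$ with $P_{1,1}\in M$, $P_{2,2}\in N$, $P_{2,1}=\emptyset$, $P_{1,2}\subseteq M\times N$, with multiplication $(PQ)_{1,1}=P_{1,1}Q_{1,1}$, $(PQ)_{2,2}=P_{2,2}Q_{2,2}$, $(PQ)_{1,2}=\{(P_{1,1}x,y)\mid (x,y)\in Q_{1,2}\}\cup\{(z,tQ_{2,2})\mid (z,t)\in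 P_{1,2}\}$. Given $\varphi,\psi$ and $a\in A$, $\mu_a$ is defined by $(\mu_a(u))_{1,1}=\varphi(u)$, $(\mu_a(u))_{2,2}=\psi(u)$, $(\mu_a(u))_{1,2}=\{(\varphi(u'),\psi(u''))\mid u=u'au'',\ u',u''\in A^*\}$. *)

(* Defs.v *)
From mathcomp Require Import all_boot.
Set Implicit Arguments. Unset Strict Implicit. Unset Printing Implicit Defensive.

Definition is_monoid (M : finType) (mul : M -> M -> M) (one : M) : Prop :=
  [/\ associative mul, left_id one mul & right_id one mul].

Definition R_le (M : finType) (mul : M -> M -> M) (p q : M) : bool :=
  [exists r, p == mul q r].
Definition L_le (M : finType) (mul : M -> M -> M) (p q : M) : bool :=
  [exists s, p == mul s q].
Definition J_le (M : finType) (mul : M -> M -> M) (p q : M) : bool :=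
  [exists r, [exists s, p == mul (mul s q) r]].

Definition J_trivial (M : finType) (mul : M -> M -> M) : Prop :=
  forall p q : M, J_le mul p q -> J_le mul q p -> p = q.

Definition R_lt (M : finType) (mul : M -> M -> M) (p q : M) : bool :=
  R_le mul p q && ~~ R_le mul q p.
Definition L_lt (M : finType) (mul : M -> M -> M) (p q : M) : bool :=
  L_le mul p q && ~~ L_le mul q p.

Definition longest_chain_size (M : finType) (lt : rel M) (k : nat) : Prop :=
  (exists s : seq M, sorted lt s /\ size s = k) /\
  (forall s : seq M, sorted lt s -> size s <= k).

Definition word_hom (A M : finType) (mul : M -> M -> M) (one : M)
  (f : seq A -> M) : Prop :=
  f [::] = one /\ forall u v, f (u ++ v) = mul (f u) (f v).

(* Schützenberger product M <> N: matrices encoded as triples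
   (P11, P22, P12) with P12 a subset of M x N (P21 is empty). *)
Definition diamond (M N : finType) := (M * N * {set M * N})%type.

Definition diamond_mul (M N : finType) (mulM : M -> M -> M) (mulN : N -> N -> N)
  (P Q : diamond M N) : diamond M N :=
  (mulM P.1.1 Q.1.1, mulN P.1.2 Q.1.2,
   [set xy | [exists x : M * N, (x \in Q.2) && (xy == (mulM P.1.1 x.1, x.2))]]
   :|: [set xy | [exists z : M * N, (z \in P.2) && (xy == (z.1, mulN z.2 Q.1.2))]]).

(* (mu_a u)_{1,2} = {(phi u', psi u'') | u = u' a u''} ; the factorizations
   u = u' a u'' correspond to positions i with u_i = a, u' = take i u,
   u'' = drop i.+1 u. *)
Definition mu12 (A M N : finType) (phi : seq A -> M) (psi : seq A -> N)
  (a : A) (u : seq A) : {set M * N} :=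
  [set p | [exists i : 'I_(size u),
      (nth a u i == a) && (p == (phi (take i u), psi (drop i.+1 u)))]].

Definition mu (A M N : finType) (phi : seq A -> M) (psi : seq A -> N)
  (a : A) (u : seq A) : diamond M N :=
  (phi u, psi u, mu12 phi psi a u).

(* Main.v *)
Require Import Defs.
From mathcomp Require Import all_boot.
From mathcomp Require Import zify.

Set Implicit Arguments. Unset Strict Implicit. Unset Printing Implicit Defensive.

Lemma sorted_strict (T : eqType) (le : rel T)
  (anti : forall x y, le x y -> le y x -> x = y) (s : seq T) :
  uniq s -> sorted le s -> sorted (fun x y => le x y && ~~ le y x) s.
Proof.
elim: s => // x s IH /= /andP[xs us].
case: s IH xs us => // y s IH xs us /= /andP[lxy ps].
rewrite lxy /=; apply/andP; split; last exact: (IH us ps).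
apply/negP => lyx; have exy := anti _ _ lxy lyx.
by rewrite exy mem_head in xs.
Qed.

Lemma chain_bound (M : finType) (le : rel M)
  (anti : forall x y, le x y -> le y x -> x = y) (k : nat)
  (Hk : longest_chain_size (fun x y => le x y && ~~ le y x) k)
  (X : {set M}) (tot : {in X &, total le}) : #|X| <= k.
Proof.
have srt : sorted le (sort le (enum X)).
  apply: (sort_sorted_in tot); apply/allP => x; by rewrite mem_enum.
have un : uniq (sort le (enum X)) by rewrite sort_uniq enum_uniq.
have := Hk.2 _ (sorted_strict anti un srt).
by rewrite size_sort -cardE.
Qed.

Lemma chain_card (M N : finType) (leM : rel M) (leN : rel N)
  (reflM : reflexive leM) (reflN : reflexive leN)
  (transM : transitive leM) (transN : transitive leN)
  (antiM : forall x y, leM x y -> leM y x -> x = y)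
  (antiN : forall x y, leN x y -> leN y x -> x = y)
  (kM kN : nat)
  (HkM : longest_chain_size (fun x y => leM x y && ~~ leM y x) kM)
  (HkN : longest_chain_size (fun x y => leN x y && ~~ leN y x) kN)
  (S : {set M * N})
  (Hc : {in S &, forall p q, (leM q.1 p.1 && leN p.2 q.2) || (leM p.1 q.1 && leN q.2 p.2)}) :
  #|S| <= kM + kN - 1.
Proof.
pose X := [set p.1 | p in S]; pose Y := [set p.2 | p in S].
have bX : #|X| <= kM.
  apply: (chain_bound antiM HkM) => x y /imsetP[p pS ->] /imsetP[q qS ->].
  by case/orP: (Hc p q pS qS) => /andP[h _]; rewrite h ?orbT.
have bY : #|Y| <= kN.
  apply: (chain_bound antiN HkN) => x y /imsetP[p pS ->] /imsetP[q qS ->].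
  by case/orP: (Hc p q pS qS) => /andP[_ h]; rewrite h ?orbT.
pose g (p : M * N) := #|[set x in X | leM p.1 x]| + #|[set y in Y | leN y p.2]|.
have mono : {in S &, forall p q, leM q.1 p.1 -> leN p.2 q.2 -> p != q -> g p < g q}.
  move=> p q pS qS lq lp npq.
  have sX : [set x in X | leM p.1 x] \subset [set x in X | leM q.1 x].
    apply/subsetP => x; rewrite !inE => /andP[-> h] /=; exact: transM h.
  have sY : [set y in Y | leN y p.2] \subset [set y in Y | leN y q.2].
    apply/subsetP => y; rewrite !inE => /andP[-> h] /=; exact: transN lp.
  case: (eqVneq p.1 q.1) => e1.
  - have e2 : p.2 != q.2.
      by apply: contra npq => /eqP e2; case: p q e1 e2 {pS qS lq lp sX sY} => [x y] [x' y'] /= -> ->.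
    have h1 := subset_leq_card sX.
    suff h2 : #|[set y in Y | leN y p.2]| < #|[set y in Y | leN y q.2]| by rewrite /g; lia.
    apply: proper_card; rewrite properEneq sY andbT.
    apply/negP => /eqP E.
    have : q.2 \in [set y in Y | leN y q.2].
      by rewrite inE reflN andbT; apply/imsetP; exists q.
    rewrite -E inE => /andP[_ h]; by rewrite (antiN _ _ lp h) eqxx in e2.
  - have h1 := subset_leq_card sY.
    suff h2 : #|[set x in X | leM p.1 x]| < #|[set x in X | leM q.1 x]| by rewrite /g; lia.
    apply: proper_card; rewrite properEneq sX andbT.
    apply/negP => /eqP E.
    have : q.1 \in [set x in X | leM q.1 x].
      by rewrite inE reflM andbT; apply/imsetP; exists q.
    rewrite -E inE => /andP[_ h]; by rewrite (antiM _ _ lq h) eqxx in e1.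
have inj : {in enum S &, injective g}.
  move=> p q; rewrite !mem_enum => pS qS gpq; apply/eqP/negPn/negP => npq.
  case/orP: (Hc p q pS qS) => /andP[h1 h2].
    by have := mono p q pS qS h1 h2 npq; rewrite gpq ltnn.
  have npq' : q != p by rewrite eq_sym.
  by have := mono q p qS pS h1 h2 npq'; rewrite gpq ltnn. 
have range : forall p, p \in S -> 2 <= g p <= #|X| + #|Y|.
  move=> p pS; rewrite /g.
  have a1 : 0 < #|[set x in X | leM p.1 x]|.
    by apply/card_gt0P; exists p.1; rewrite inE reflM andbT; apply/imsetP; exists p.
  have a2 : 0 < #|[set y in Y | leN y p.2]|.
    by apply/card_gt0P; exists p.2; rewrite inE reflN andbT; apply/imsetP; exists p.
  have c1 : #|[set x in X | leM p.1 x]| <= #|X|.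
    by apply: subset_leq_card; apply/subsetP => x; rewrite inE => /andP[].
  have c2 : #|[set y in Y | leN y p.2]| <= #|Y|.
    by apply: subset_leq_card; apply/subsetP => x; rewrite inE => /andP[].
  apply/andP; split; lia.
have : size (map g (enum S)) <= size (iota 2 (#|X| + #|Y| - 1)).
  apply: uniq_leq_size; first by rewrite (map_inj_in_uniq inj) enum_uniq.
  move=> n /mapP[p]; rewrite mem_enum => pS ->.
  rewrite mem_iota; have /andP[r1 r2] := range p pS; apply/andP; split; lia.
rewrite size_map size_iota -cardE => h.
apply: leq_trans h _; apply: leq_sub2r; exact: leq_add bX bY.
Qed.

Lemma R_refl (M : finType) (mul : M -> M -> M) one (HM : is_monoid mul one) :
  reflexive (R_le mul).
Proof. case: HM => _ _ r1 x; apply/existsP; exists one; by rewrite r1. Qed.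

Lemma L_refl (M : finType) (mul : M -> M -> M) one (HM : is_monoid mul one) :
  reflexive (L_le mul).
Proof. case: HM => _ l1 _ x; apply/existsP; exists one; by rewrite l1. Qed.

Lemma R_trans (M : finType) (mul : M -> M -> M) one (HM : is_monoid mul one) :
  transitive (R_le mul).
Proof.
case: HM => asc _ _ y x z /existsP[r /eqP->] /existsP[r' /eqP->].
apply/existsP; exists (mul r' r); by rewrite asc.
Qed.

Lemma L_trans (M : finType) (mul : M -> M -> M) one (HM : is_monoid mul one) :
  transitive (L_le mul).
Proof.
case: HM => asc _ _ y x z /existsP[r /eqP->] /existsP[r' /eqP->].
apply/existsP; exists (mul r r'); by rewrite asc.
Qed.

Lemma R_anti (M : finType) (mul : M -> M -> M) one (HM : is_monoid mul one)
  (J : J_trivial mul) x y : R_le mul x y -> R_le mul y x -> x = y.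
Proof.
case: HM => _ l1 _ /existsP[r /eqP e1] /existsP[r' /eqP e2]; apply: J.
  apply/existsP; exists r; apply/existsP; exists one; by rewrite l1 e1.
apply/existsP; exists r'; apply/existsP; exists one; by rewrite l1 e2.
Qed.

Lemma L_anti (M : finType) (mul : M -> M -> M) one (HM : is_monoid mul one)
  (J : J_trivial mul) x y : L_le mul x y -> L_le mul y x -> x = y.
Proof.
case: HM => _ _ r1 /existsP[r /eqP e1] /existsP[r' /eqP e2]; apply: J.
  apply/existsP; exists one; apply/existsP; exists r; by rewrite r1 e1.
apply/existsP; exists one; apply/existsP; exists r'; by rewrite r1 e2.
Qed.

Lemma mu12_comp (A M N : finType) (a : A)
  (mulM : M -> M -> M) (oneM : M) (mulN : N -> N -> N) (oneN : N)
  (phi : seq A -> M) (psi : seq A -> N)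
  (Hphi : word_hom mulM oneM phi) (Hpsi : word_hom mulN oneN psi) (u : seq A) :
  {in mu12 phi psi a u &, forall p q,
     (R_le mulM q.1 p.1 && L_le mulN p.2 q.2) || (R_le mulM p.1 q.1 && L_le mulN q.2 p.2)}.
Proof.
have key : forall i j : nat, i <= j ->
    R_le mulM (phi (take j u)) (phi (take i u)) && L_le mulN (psi (drop i.+1 u)) (psi (drop j.+1 u)).
  move=> i j ij; apply/andP; split.
    apply/existsP; exists (phi (drop i (take j u))).
    rewrite -Hphi.2 -(take_takel u ij) cat_take_drop //.
  apply/existsP; exists (psi (take (j - i) (drop i.+1 u))).
  rewrite -Hpsi.2.
  have -> : drop j.+1 u = drop (j - i) (drop i.+1 u) by rewrite drop_drop; congr drop; lia.
  by rewrite cat_take_drop.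
move=> p q; rewrite !inE => /existsP[i /andP[_ /eqP->]] /existsP[j /andP[_ /eqP->]] /=.
case: (leqP i j) => ij; first by rewrite key.
by rewrite (key j i) ?orbT // ltnW.
Qed.

Lemma card_small_sets (T : finType) k :
  #|[set A : {set T} | #|A| <= k]| = \sum_(i < k.+1) 'C(#|T|, i).
Proof.
elim: k => [|k IH].
  rewrite big_ord1 -card_draws; apply: eq_card => A; by rewrite !inE leqn0.
rewrite big_ord_recr /= -IH -card_draws.
rewrite -(cardsID [set A : {set T} | #|A| <= k] [set A : {set T}| #|A| <= k.+1]).
congr (_ + _); apply: eq_card => A; rewrite !inE.
  by case: (ltngtP #|A| k.+1) => h //=; lia.
by case: (ltngtP #|A| k.+1) => h //=; lia.
Qed.

Theorem proposition6
  (A M N : finType) (a : A)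
  (mulM : M -> M -> M) (oneM : M) (mulN : N -> N -> N) (oneN : N)
  (HM : is_monoid mulM oneM) (HN : is_monoid mulN oneN)
  (JM : J_trivial mulM) (JN : J_trivial mulN)
  (rho lambda : nat)
  (Hrho : longest_chain_size (R_lt mulM) rho)
  (Hlambda : longest_chain_size (L_lt mulN) lambda)
  (phi : seq A -> M) (psi : seq A -> N)
  (Hphi : word_hom mulM oneM phi) (Hpsi : word_hom mulN oneN psi) :
  (forall u : seq A, #|mu12 phi psi a u| <= rho + lambda - 1) /\
  rho + lambda - 1 <= #|M| + #|N| - 1 /\
  (forall S : {set diamond M N},
     (forall x, x \in S -> exists u : seq A, mu phi psi a u = x) ->
     #|S| <= #|M| * #|N| * \sum_(i < (rho + lambda - 1).+1) 'C(#|M| * #|N|, i)).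
Proof.
have P1 : forall u : seq A, #|mu12 phi psi a u| <= rho + lambda - 1.
  move=> u; apply: (chain_card (R_refl HM) (L_refl HN) (R_trans HM) (L_trans HN)
     (R_anti HM JM) (L_anti HN JN) Hrho Hlambda).
  move=> p q hp hq; exact: (mu12_comp Hphi Hpsi hp hq).
split; first exact: P1.
split.
  have bM : rho <= #|M|.
    case: Hrho => [[s [srt <-]] _].
    have us : uniq s.
      apply: (sorted_uniq _ _ srt).
        move=> y x z /andP[h1 h2] /andP[h3 h4]; rewrite /R_lt (R_trans HM h1 h3) /=.
        apply/negP => h; by rewrite (R_trans HM h h1) in h4.
      by move=> x; rewrite /R_lt andbN.
    by rewrite cardE; apply: uniq_leq_size => // x; rewrite mem_enum.
  have bN : lambda <= #|N|.
    case: Hlambda => [[s [srt <-]] _].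
    have us : uniq s.
      apply: (sorted_uniq _ _ srt).
        move=> y x z /andP[h1 h2] /andP[h3 h4]; rewrite /L_lt (L_trans HN h1 h3) /=.
        apply/negP => h; by rewrite (L_trans HN h h1) in h4.
      by move=> x; rewrite /L_lt andbN.
    by rewrite cardE; apply: uniq_leq_size => // x; rewrite mem_enum.
  apply: leq_sub2r; exact: leq_add.
move=> S HS.
have sub : S \subset setX [set: M * N] [set T : {set M * N} | #|T| <= rho + lambda - 1].
  apply/subsetP => x /HS [u <-]; rewrite in_setX in_setT inE /=; exact: P1.
apply: leq_trans (subset_leq_card sub) _.
by rewrite cardsX cardsT card_small_sets card_prod.
Qed.
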